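(* Both SW-PAV and IW-PAV can fail SW-JR when an SW-JR committee exists: there exist approval-based SCV instances admitting a committee that satisfies SW-JR, in which a committee maximizing the SW-PAV score does not satisfy SW-JR, and likewise in which a committee maximizing the IW-PAV score does not satisfy SW-JR.
   Context: An approval-based sub-committee voting (SCV) instance consists of a set of voters $N=\{1,\ldots,n\}$, a finite set of candidates $C$ partitioned into candidate subsets $C_1,\ldots,C_\ell$, positive integer quotas $k_j\le |C_j|$ with $k=\sum_{j=1}^\ell k_j$, and approval ballots $A_i\subseteq C$ for $i\in N$. A committee is a set $W\subseteq C$ with $|W\cap C_j|=k_j$ for every $j$. Let $r(0)=0$ and $r(t)=\sum_{p=1}^t 1/p$ for $t\ge1$. The SW-PAV score of $W$ is $\sum_{i\in N} r(|W\cap A_i|)$; the IW-PAV score is $\sum_{j=1}^\ell\sum_{i\in N} r(|W\cap A_i\cap C_j|)$. $W$ satisfies SW-JR if for every $X\subseteq N$ with $|X|\ge n/k$ and $|\bigcap_{i\in X}A_i|\ge 1$ we have $|W\cap \bigcup_{i\in X}A_i|\ge 1$. *)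

(* Defs.v *)
From mathcomp Require Import all_boot all_order all_algebra.
Set Implicit Arguments. Unset Strict Implicit. Unset Printing Implicit Defensive.
Import Order.TTheory GRing.Theory Num.Theory.
Local Open Scope ring_scope.

Section SCV.
Variables (C : finType) (l n : nat).
(* part c = index j of the candidate subset C_j containing c *)
Variable part : C -> 'I_l.
Variable quota : 'I_l -> nat.
Variable A : 'I_n -> {set C}.

Definition Csub (j : 'I_l) : {set C} := [set c | part c == j].

Definition valid_instance : bool :=
  [&& (0 < l)%N, (0 < n)%N & [forall j, (0 < quota j)%N && (quota j <= #|Csub j|)%N]].

Definition ktot : nat := (\sum_(j < l) quota j)%N.

Definition is_committee (W : {set C}) : bool :=
  [forall j, #|W :&: Csub j| == quota j].

Definition harm (t : nat) : rat := \sum_(p < t) (p.+1%:R)^-1.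

Definition sw_pav (W : {set C}) : rat := \sum_(i < n) harm #|W :&: A i|.

Definition iw_pav (W : {set C}) : rat :=
  \sum_(j < l) \sum_(i < n) harm #|W :&: A i :&: Csub j|.

(* |X| >= n/k is written |X| * k >= n (k > 0 for valid instances) *)
Definition sw_jr (W : {set C}) : Prop :=
  forall X : {set 'I_n}, (n <= #|X| * ktot)%N ->
    (\bigcap_(i in X) A i) != set0 ->
    (W :&: \bigcup_(i in X) A i) != set0.

Definition maximizes (score : {set C} -> rat) (W : {set C}) : Prop :=
  is_committee W /\ forall W', is_committee W' -> score W' <= score W.

End SCV.

(* Main.v *)
Require Import Defs.
From mathcomp Require Import all_boot all_order all_algebra.
From mathcomp Require Import lra.
Import Order.TTheory GRing.Theory Num.Theory.
Definition pt (c : 'I_5) : 'I_2 := if val c \in [:: 2; 3]%N then ord_max else ord0.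
Definition qt (j : 'I_2) : nat := if val j == 0%N then 3%N else 1%N.
Definition Ai (i : 'I_4) : {set 'I_5} :=
  match val i with
  | 0 => [set x : 'I_5 | val x \in [:: 0; 3]%N]
  | 1 => [set x : 'I_5 | val x \in [:: 2]%N]
  | _ => [set x : 'I_5 | val x \in [:: 1; 3; 4]%N]
  end.
Definition W2 : {set 'I_5} := [set x : 'I_5 | val x \in [:: 0; 1; 2; 4]%N].
Definition W3 : {set 'I_5} := [set x : 'I_5 | val x \in [:: 0; 1; 3; 4]%N].

Lemma cardc (A : {set 'I_5}) : #|A| = \sum_(i < 5) (i \in A).
Proof. rewrite -sum1_card big_mkcond /=. apply: eq_bigr => i _. by case: (i \in A). Qed.

Ltac crd := rewrite !cardc !big_ord_recr !big_ord0 /= !inE /=.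

Lemma valid : valid_instance 4 pt qt.
Proof.
rewrite /valid_instance /=; apply/forallP => -[[|[|m]] Hm] //=; rewrite /Csub; crd; reflexivity.
Qed.

Lemma comW2 : is_committee pt qt W2.
Proof. apply/forallP => -[[|[|m]] Hm] //=; rewrite /Csub; crd; reflexivity. Qed.
Lemma comW3 : is_committee pt qt W3.
Proof. apply/forallP => -[[|[|m]] Hm] //=; rewrite /Csub; crd; reflexivity. Qed.

Lemma h1 : harm 1 = 1%R. Proof. by rewrite /harm !big_ord_recr big_ord0 /=; lra. Qed.
Lemma h2 : harm 2 = (3/2)%R. Proof. rewrite /harm !big_ord_recr big_ord0 /=. lra. Qed.
Lemma h3 : harm 3 = (11/6)%R. Proof. rewrite /harm !big_ord_recr big_ord0 /=. lra. Qed.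
Lemma h0 : harm 0 = 0%R. Proof. by rewrite /harm big_ord0. Qed.
Lemma cw2 (i : 'I_4) : #|W2 :&: Ai i| = nth 0%N [:: 1; 1; 2; 2]%N i.
Proof. case: i => [[|[|[|[|m]]]] Hm] //=; rewrite /Ai /=; crd; reflexivity. Qed.
Lemma cw3 (i : 'I_4) : #|W3 :&: Ai i| = nth 0%N [:: 2; 0; 3; 3]%N i.
Proof. case: i => [[|[|[|[|m]]]] Hm] //=; rewrite /Ai /=; crd; reflexivity. Qed.
Lemma sw23 : (sw_pav Ai W2 < sw_pav Ai W3)%R.
Proof.
rewrite /sw_pav (eq_bigr _ (fun i _ => congr1 harm (cw2 i))) (eq_bigr _ (fun i _ => congr1 harm (cw3 i))).
rewrite !big_ord_recr !big_ord0 /= h0 h1 h2 h3. lra. Qed.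
Lemma iw2 (j : 'I_2) (i : 'I_4) : #|W2 :&: Ai i :&: Csub pt j| = nth 0%N (nth [::] [:: [:: 1; 0; 2; 2]; [:: 0; 1; 0; 0]]%N j) i.
Proof. case: j => [[|[|m]] Hm] //; case: i => [[|[|[|[|m']]]] Hm'] //=; rewrite /Ai /Csub /=; crd; reflexivity. Qed.
Lemma iw3 (j : 'I_2) (i : 'I_4) : #|W3 :&: Ai i :&: Csub pt j| = nth 0%N (nth [::] [:: [:: 1; 0; 2; 2]; [:: 1; 0; 1; 1]]%N j) i.
Proof. case: j => [[|[|m]] Hm] //; case: i => [[|[|[|[|m']]]] Hm'] //=; rewrite /Ai /Csub /=; crd; reflexivity. Qed.
Lemma iw23 : (iw_pav pt Ai W2 < iw_pav pt Ai W3)%R.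
Proof.
rewrite /iw_pav (eq_bigr _ (fun j _ => eq_bigr _ (fun i _ => congr1 harm (iw2 j i)))).
rewrite (eq_bigr _ (fun j _ => eq_bigr _ (fun i _ => congr1 harm (iw3 j i)))).
rewrite !big_ord_recr !big_ord0 /= h0 h1 h2. lra. Qed.
Lemma kt : ktot qt = 4%N.
Proof. by rewrite /ktot !big_ord_recr big_ord0. Qed.

Lemma jrW2 : sw_jr qt Ai W2.
Proof.
move=> X; rewrite kt => Hn _.
have : X != set0 by apply: contraTneq Hn => ->; rewrite cards0.
case/set0Pn => i Hi.
have [x Hx1 Hx2] : exists2 x, x \in W2 & x \in Ai i.
  case: i Hi => [[|[|[|[|m]]]] Hm] Hi //.
  - by exists (@Ordinal 5 0 isT); rewrite /Ai !inE.
  - by exists (@Ordinal 5 2 isT); rewrite /Ai !inE.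
  - by exists (@Ordinal 5 1 isT); rewrite /Ai !inE.
  - by exists (@Ordinal 5 1 isT); rewrite /Ai !inE.
apply/set0Pn; exists x; rewrite inE Hx1 /=.
by apply/bigcupP; exists i.
Qed.

Lemma jr1 W : sw_jr qt Ai W -> exists2 x : 'I_5, x \in W & val x = 2%N.
Proof.
move=> H.
have := H [set (@Ordinal 4 1 isT)].
rewrite kt cards1 big_set1 big_set1 => /(_ isT).
have -> : Ai (@Ordinal 4 1 isT) = [set x : 'I_5 | val x \in [:: 2]%N] by [].
move=> H1.
have /set0Pn [x] : W :&: [set x : 'I_5 | val x \in [:: 2]%N] != set0.
  by apply: H1; apply/set0Pn; exists (@Ordinal 5 2 isT); rewrite !inE.
 rewrite !inE => /andP[Hx]; exists x => //; exact/eqP.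
Qed.

Lemma notjrW3 : ~ sw_jr qt Ai W3.
Proof. case/jr1 => -[[|[|[|[|[|m]]]]] Hm] //=; rewrite /W3 inE //=. Qed.

Lemma onlyW2 W : is_committee pt qt W -> sw_jr qt Ai W -> W = W2.
Proof.
move=> /forallP HW /jr1 [x2 Hx2 Ex2].
have C0 : Csub pt ord0 = [set x : 'I_5 | val x \in [:: 0; 1; 4]%N].
  by apply/setP => -[[|[|[|[|[|m]]]]] Hm]; rewrite /Csub !inE.
have C1 : Csub pt ord_max = [set x : 'I_5 | val x \in [:: 2; 3]%N].
  by apply/setP => -[[|[|[|[|[|m]]]]] Hm]; rewrite /Csub !inE.
have H0 := HW ord0; have H1 := HW ord_max.
rewrite C0 in H0; rewrite C1 in H1.
have c0 : #|[set x : 'I_5 | val x \in [:: 0; 1; 4]%N]| = 3%N by crd.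
have E0 : W :&: [set x : 'I_5 | val x \in [:: 0; 1; 4]%N] =i [set x : 'I_5 | val x \in [:: 0; 1; 4]%N].
  apply/subset_cardP; first by rewrite c0; exact/eqP.
  exact: subsetIr.
have In0 y : val y \in [:: 0; 1; 4]%N -> y \in W.
  move=> Hy; have := E0 y; rewrite in_setI !in_set Hy andbT => ->; done.
have Out3 y : val y = 3%N -> y \notin W.
  move=> Ey; apply/negP => Hy.
  have : #|[set x2; y]| <= #|W :&: [set x : 'I_5 | val x \in [:: 2; 3]%N]|.
    apply: subset_leq_card; apply/subsetP => z; rewrite !inE => /orP[] /eqP ->.
      by rewrite Hx2 Ex2.
    by rewrite Hy Ey.
  rewrite (eqP H1) cards2.
  suff -> : x2 != y by [].
  by apply/eqP => E; move: Ex2; rewrite E Ey.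
have Ix2 y : val y = 2%N -> y \in W by move=> Ey; have -> : y = x2 by apply: val_inj; rewrite Ey Ex2.
apply/setP => y; rewrite inE.
case: y In0 Out3 Ix2 => [[|[|[|[|[|m]]]]] Hm] In0 Out3 Ix2 //=.
- exact: In0.
- exact: In0.
- exact: Ix2.
- exact/negbTE/Out3.
- exact: In0.
Qed.

Theorem mainTheorem11 :
  (exists (C : finType) (l n : nat) (part : C -> 'I_l) (quota : 'I_l -> nat)
          (A : 'I_n -> {set C}),
     valid_instance n part quota /\
     (exists W, is_committee part quota W /\ sw_jr quota A W) /\
     (forall W, maximizes part quota (sw_pav A) W -> ~ sw_jr quota A W)) /\
  (exists (C : finType) (l n : nat) (part : C -> 'I_l) (quota : 'I_l -> nat)
          (A : 'I_n -> {set C}),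
     valid_instance n part quota /\
     (exists W, is_committee part quota W /\ sw_jr quota A W) /\
     (forall W, maximizes part quota (iw_pav part A) W -> ~ sw_jr quota A W)).
Proof.
split; exists ('I_5 : finType), 2%N, 4%N, pt, qt, Ai;
  (split; [exact: valid | split; [by exists W2; split; [exact: comW2 | exact: jrW2] |]]);
  move=> W [HW Hmax] Hjr; have E := onlyW2 W HW Hjr; subst W;
  have := Hmax W3 comW3.
- by rewrite leNgt sw23.
- by rewrite leNgt iw23.
Qed.
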